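(* Let $K$ be a valued field and $d\ge 1$. Then the family $\operatorname{Conv}_{K^d}$ of convex subsets of $K^d$ has breadth exactly $d$: whenever $C_1,\dots,C_n\subseteq K^d$ are convex with $\bigcap_{i=1}^nC_i\ne\emptyset$, there is $S\subseteq\{1,\dots,n\}$ with $|S|\le d$ and $\bigcap_{i\in S}C_i=\bigcap_{i=1}^nC_i$; and $d$ is the least number with this property.
   Context: $K$ is a field with valuation $\nu$ and valuation ring $\mathcal{O}=\{x:\nu(x)\ge0\}$. A set $X\subseteq K^d$ is convex if it is closed under combinations $\sum_{i=1}^n\alpha_ix_i$ with $x_i\in X$, $\alpha_i\in\mathcal{O}$, $\sum\alpha_i=1$. A family $\mathcal{F}$ of subsets of a set has breadth $d$ if every nonempty intersection of finitely many members of $\mathcal{F}$ equals the intersection of at most $d$ of them, and $d$ is minimal with this property. *)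

(* Defs.v *)
From mathcomp Require Import all_boot all_order all_algebra.
Set Implicit Arguments. Unset Strict Implicit. Unset Printing Implicit Defensive.
Import GRing.Theory.
Local Open Scope ring_scope.

Definition ordered_abelian_group (G : zmodType) (le : rel G) : Prop :=
  [/\ reflexive le, antisymmetric le, transitive le, total le &
      forall x y z : G, le x y -> le (x + z) (y + z)].

(* Γ ∪ {∞}, with ∞ represented by None. *)
Definition ole (G : zmodType) (le : rel G) (a b : option G) : bool :=
  match a, b with
  | _, None => true
  | None, Some _ => false
  | Some x, Some y => le x y
  end.

Definition oadd (G : zmodType) (a b : option G) : option G :=
  match a, b with
  | Some x, Some y => Some (x + y)
  | _, _ => None
  end.

Definition is_valuation (K : fieldType) (G : zmodType) (le : rel G)
    (nu : K -> option G) : Prop :=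
  [/\ forall x, nu x = None <-> x = 0,
      forall x y, nu (x * y) = oadd (nu x) (nu y) &
      forall x y, ole le (nu x) (nu (x + y)) || ole le (nu y) (nu (x + y))].

Definition val_ring (K : fieldType) (G : zmodType) (le : rel G)
    (nu : K -> option G) (x : K) : Prop := ole le (Some 0) (nu x).

Definition convex (K : fieldType) (G : zmodType) (le : rel G)
    (nu : K -> option G) (d : nat) (X : 'rV[K]_d -> Prop) : Prop :=
  forall (n : nat) (x : 'I_n -> 'rV[K]_d) (alpha : 'I_n -> K),
    (forall i, X (x i)) -> (forall i, val_ring le nu (alpha i)) ->
    \sum_(i < n) alpha i = 1 ->
    X (\sum_(i < n) alpha i *: x i).

Definition breadth_le (T : Type) (F : (T -> Prop) -> Prop) (m : nat) : Prop :=
  forall (n : nat) (C : 'I_n -> T -> Prop),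
    (forall i, F (C i)) ->
    (exists x, forall i, C i x) ->
    exists S : {set 'I_n}, (#|S| <= m)%N /\
      (forall x, (forall i, i \in S -> C i x) <-> (forall i, C i x)).

Definition breadth (T : Type) (F : (T -> Prop) -> Prop) (m : nat) : Prop :=
  breadth_le F m /\ forall m', (m' < m)%N -> ~ breadth_le F m'.

(* Main.v *)
Require Import Defs.
From mathcomp Require Import all_boot all_order all_algebra.
From Stdlib Require Import Classical.
Set Implicit Arguments. Unset Strict Implicit. Unset Printing Implicit Defensive.
Import GRing.Theory.
Local Open Scope ring_scope.


Section Val.
Variables (K : fieldType) (G : zmodType) (le : rel G) (nu : K -> option G).
Hypothesis (hG : ordered_abelian_group le) (hv : is_valuation le nu).

Lemma nu0 : nu 0 = None. Proof. by case: hv => h _ _; apply/h. Qed.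
Lemma nu_neq0 x : x != 0 -> exists a, nu x = Some a.
Proof. case: hv => h _ _ /eqP nx; case E: (nu x) => [a|]; first by exists a.
by move/h: E. Qed.
Lemma nuM x y : nu (x * y) = oadd (nu x) (nu y). Proof. by case: hv. Qed.

Lemma nu1 : nu 1 = Some 0.
Proof. have [a E] := nu_neq0 (oner_neq0 K).
have := nuM 1 1; rewrite mulr1 E /= => -[] h.
have : a + a = a + 0 by rewrite addr0 -h.
by move/addrI ->. Qed.

Lemma nuN1 : nu (-1) = Some 0.
Proof. have [b E] : exists b, nu (-1) = Some b.
  by apply: nu_neq0; rewrite oppr_eq0 oner_neq0.
have := nuM (-1) (-1); rewrite mulrNN mulr1 nu1 E /= => -[] hb.
case: hG => r a t tot hadd; congr Some; symmetry.
case/orP: (tot 0 b) => h.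
- have := hadd _ _ b h; rewrite add0r -hb => h2; by apply: a; rewrite h h2.
- have := hadd _ _ b h; rewrite add0r -hb => h2; by apply: a; rewrite h h2.
Qed.

Lemma ole_trans a b c : ole le a b -> ole le b c -> ole le a c.
Proof. case: hG => r _ t _ _; case: a => [x|]; case: b => [y|]; case: c => [z|] //=.
move=> h1 h2; exact: t h1 h2. Qed.

Lemma ole_total a b : ole le a b || ole le b a.
Proof. case: hG => _ _ _ tot _; case: a; case: b => //= x y; exact: tot. Qed.

Lemma ole_refl a : ole le a a.
Proof. case: hG => r _ _ _ _; case: a => //= x; exact: r. Qed.

Lemma vr0 : val_ring le nu 0. Proof. by rewrite /val_ring nu0. Qed.
Lemma vr1 : val_ring le nu 1. Proof. by rewrite /val_ring nu1 ole_refl. Qed.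
Lemma vrN x : val_ring le nu x -> val_ring le nu (- x).
Proof. by rewrite /val_ring -mulN1r nuM nuN1; case: (nu x) => //= a; rewrite add0r. Qed.
Lemma vrD x y : val_ring le nu x -> val_ring le nu y -> val_ring le nu (x + y).
Proof. rewrite /val_ring => hx hy; case: hv => _ _ /(_ x y) /orP [] h.
  exact: ole_trans hx h. exact: ole_trans hy h. Qed.
Lemma vrB x y : val_ring le nu x -> val_ring le nu y -> val_ring le nu (x - y).
Proof. by move=> hx hy; apply: vrD => //; apply: vrN. Qed.

Lemma vr_div x y : y != 0 -> ole le (nu y) (nu x) -> val_ring le nu (x / y).
Proof.
move=> y0 h; have [b Eb] := nu_neq0 y0.
have E : x = x / y * y by rewrite divfK.
move: h; rewrite {1}E nuM Eb /val_ring; case: (nu (x / y)) => //= a h.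
case: hG => _ _ _ _ hadd; have := hadd _ _ (- b) h.
by rewrite subrr addrK.
Qed.
End Val.

Section Conv.
Variables (K : fieldType) (G : zmodType) (le : rel G) (nu : K -> option G) (d : nat).
Hypothesis (hG : ordered_abelian_group le) (hv : is_valuation le nu).
Variables (C : 'rV[K]_d -> Prop) (hC : convex le nu C).

Lemma conv3 u v w a b c : C u -> C v -> C w ->
  val_ring le nu a -> val_ring le nu b -> val_ring le nu c -> a + b + c = 1 ->
  C (a *: u + b *: v + c *: w).
Proof.
move=> Cu Cv Cw va vb vc s1.
have := hC (x := fun i : 'I_3 => nth 0 [:: u; v; w] i)
           (alpha := fun i : 'I_3 => nth 0 [:: a; b; c] i).
rewrite !big_ord_recl !big_ord0 /= !addr0 !addrA; apply.
- by case=> [[|[|[|?]]] ?].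
- by case=> [[|[|[|?]]] ?].
- exact: s1.
Qed.

Variable p : 'rV[K]_d.
Hypothesis Cp : C p.

Lemma modD y z : C (p + y) -> C (p + z) -> C (p + (y + z)).
Proof.
move=> hy hz.
have E : 1 *: (p + y) + 1 *: (p + z) + (-1) *: p = p + (y + z).
  by rewrite !scale1r scaleN1r (addrC p z) !addrA addrK.
rewrite -E; apply: conv3 => //; try exact: vr1 hG hv.
- by apply: (vrN hG hv); apply: (vr1 hG hv).
- by rewrite addrK.
Qed.

Lemma modZ a y : val_ring le nu a -> C (p + y) -> C (p + a *: y).
Proof.
move=> va hy.
have E : a *: (p + y) + (1 - a) *: p + 0 *: p = p + a *: y.
  rewrite scale0r addr0 scalerDr scalerBl scale1r.
  by rewrite addrC addrA addrNK addrC.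
rewrite -E; apply: conv3 => //.
- exact (vrB hG hv (vr1 hG hv) va).
- exact (vr0 hv).
- by rewrite addr0 addrC subrK.
Qed.

Lemma modsum (I : finType) (P : pred I) (b : I -> K) (y : I -> 'rV[K]_d) :
  (forall i, P i -> val_ring le nu (b i)) -> (forall i, P i -> C (p + y i)) ->
  C (p + \sum_(i | P i) b i *: y i).
Proof.
move=> hb hy; apply: (big_ind (fun v => C (p + v))).
- by rewrite addr0.
- exact: modD.
- by move=> i Pi; apply: modZ; [apply: hb | apply: hy].
Qed.
End Conv.

Lemma ex_min (T : eqType) (r : rel T) : (forall x y, r x y || r y x) -> transitive r ->
  forall x0 s, exists2 x, x \in x0 :: s & forall y, y \in x0 :: s -> r x y.
Proof.
move=> tot tr x0; elim=> [|a s [m hm1 hm2]].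
  exists x0; first by rewrite inE. 
  by move=> y; rewrite inE => /eqP ->; have := tot x0 x0; rewrite orbb.
case/orP: (tot m a) => h.
- exists m; first by move: hm1; rewrite !inE => /orP [->|->]; rewrite ?orbT.
  move=> y; rewrite !inE => /or3P [hy|hy|hy].
  + by apply: hm2; rewrite inE hy.
  + by rewrite (eqP hy).
  + by apply: hm2; rewrite inE hy orbT.
- exists a; first by rewrite !inE eqxx orbT.
  move=> y; rewrite !inE => /or3P [hy|hy|hy].
  + by apply: (tr _ _ _ h); apply: hm2; rewrite inE hy.
  + by rewrite (eqP hy); have := tot a a; rewrite orbb.
  + by apply: (tr _ _ _ h); apply: hm2; rewrite inE hy orbT.
Qed.

Section Key.
Variables (K : fieldType) (G : zmodType) (le : rel G) (nu : K -> option G) (d : nat).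
Hypothesis (hG : ordered_abelian_group le) (hv : is_valuation le nu).

Lemma key n (C : 'I_n -> 'rV[K]_d -> Prop) p : (d < n)%N ->
  (forall i, convex le nu (C i)) -> (forall i, C i p) ->
  exists j, forall x, (forall i, i != j -> C i x) -> C j x.
Proof.
move=> ltdn hC hp.
case: (classic (exists j, forall x, (forall i, i != j -> C i x) -> C j x)) => // hn.
have hx : forall j, exists2 x, (forall i, i != j -> C i x) & ~ C j x.
  move=> j; apply: NNPP => h; apply: hn; exists j => x hx; apply: NNPP => hcx.
  by apply: h; exists x.
have [x hx1 hx2] := fin_all_exists2 hx.
pose A := \matrix_(i < n) (x i - p).
have nfree : ~~ row_free A.
  apply/negP => /eqP h; have := rank_leq_col A; rewrite h.
  by rewrite leqNgt ltdn.
have [c [c0 cn0]] : exists c : 'rV_n, c *m A = 0 /\ c != 0.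
  apply: NNPP => h; move/negP: nfree; apply; apply: inj_row_free => v hv0.
  apply/eqP; apply: NNPP => hne; apply: h; exists v; split => //; exact/negP.
have [k0 hk0] : exists k0, c 0 k0 != 0 by apply/rV0Pn.
have n0 : (0 < n)%N by apply: leq_ltn_trans ltdn.
pose i0 := Ordinal n0.
have [j _ hj] := ex_min (r := fun a b => ole le (nu (c 0 a)) (nu (c 0 b)))
  (fun a b => ole_total hG _ _) (fun b a e => @ole_trans _ _ hG _ _ _) i0 (enum 'I_n).
have hjk : forall k, ole le (nu (c 0 j)) (nu (c 0 k)).
  by move=> k; apply: hj; rewrite inE mem_enum orbT.
have cj0 : c 0 j != 0.
  apply/negP => /eqP e; have := hjk k0; rewrite e (nu0 hv).
  by have [a ->] := nu_neq0 hv hk0.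
pose y i := x i - p.
have sum0 : \sum_i c 0 i *: y i = 0.
  by rewrite -[RHS]c0 mulmx_sum_row; apply: eq_bigr => i _; rewrite rowK.
have yj : y j = \sum_(i | i != j) (- (c 0 i / c 0 j)) *: y i.
  move: sum0; rewrite (bigD1 j) //= => /eqP; rewrite addr_eq0 => /eqP hs.
  have -> : y j = (c 0 j)^-1 *: (c 0 j *: y j) by rewrite scalerA mulVf // scale1r.
  rewrite hs scalerN scaler_sumr -sumrN; apply: eq_bigr => i _.
  by rewrite scalerA scaleNr mulrC.
case: (hx2 j); have -> : x j = p + y j by rewrite /y addrC subrK.
rewrite yj; apply: (modsum hG hv (hC j) (hp j)).
- move=> i _; exact (vrN hG hv (vr_div hG hv cj0 (hjk i))).
- move=> i ij; rewrite /y (addrC (x i)) addrA subrr add0r; apply: hx1; by rewrite eq_sym.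
Qed.
End Key.

Lemma upper (K : fieldType) (G : zmodType) (le : rel G)
    (nu : K -> option G) (d : nat) :
  ordered_abelian_group le -> is_valuation le nu ->
  breadth_le (convex le nu (d:=d)) d.
Proof.
move=> hG hv n; elim: n => [|n IH] C hC [p hp].
  exists set0; split; first by rewrite cards0.
  by move=> x; split => _ [].
case: (leqP n.+1 d) => hnd.
  exists setT; split; first by rewrite cardsT card_ord.
  by move=> x; split => h i //; apply: h; rewrite inE.
have [j hj] := key hG hv hnd hC hp.
have [S' [hS' eS']] := IH (fun i => C (lift j i)) (fun i => hC _) (ex_intro _ p (fun i => hp _)).
exists (lift j @: S'); split.
  exact: leq_trans (leq_imset_card _ _) hS'.
move=> x; split => [h|h i _]; last exact: h.
have h' : forall i', C (lift j i') x.
  by apply/eS' => i' hi'; apply: h; apply: imset_f.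
have hne : forall i, i != j -> C i x.
  move=> i ij; case: (unliftP j i) => [i' ->|e]; first exact: h'.
  by rewrite e eqxx in ij.
move=> i; case: (eqVneq i j) => [->|ij]; last exact: hne.
exact: hj.
Qed.

Lemma lower (K : fieldType) (G : zmodType) (le : rel G)
    (nu : K -> option G) (d : nat) m' :
  (m' < d)%N -> ~ breadth_le (convex le nu (d:=d)) m'.
Proof.
move=> hm hb.
have := hb d (fun i (x : 'rV[K]_d) => x 0 i = 0).
case.
- move=> i n x alpha hx _ _; rewrite summxE; apply: big1 => k _.
  by rewrite mxE hx mulr0.
- by exists 0 => i; rewrite mxE.
move=> S [hS eS].
have : (0 < #|~: S|)%N.
  by rewrite cardsCs setCK card_ord subn_gt0; exact: leq_ltn_trans hS hm.
case/card_gt0P => j; rewrite inE => hj.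
pose x : 'rV[K]_d := \row_k (if k == j then 1 else 0).
have := (eS x).1.
have : x 0 j = 0 -> False by rewrite mxE eqxx; apply/eqP; exact: oner_neq0.
move=> nz h; apply: nz; apply: h => i iS; rewrite mxE.
case: eqP => // e; by rewrite -e iS in hj.
Qed.

Theorem theorem4p3 (K : fieldType) (G : zmodType) (le : rel G)
    (nu : K -> option G) (d : nat) :
  ordered_abelian_group le -> is_valuation le nu -> (1 <= d)%N ->
  breadth (convex le nu (d:=d)) d.
Proof.
move=> hG hv _; split; first exact: upper hG hv.
by move=> m hm; apply: lower.
Qed.
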